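(* There exist a non-elementary hyperbolic group $G$, a finite generating set $S$ of $G$ (with $S=S^{-1}$, $e\notin S$), and a sequence of elements $(w_i)_{i\ge 1}$ of $G$ such that $\kappa(w_i)>0$ for all $i$, curvature computed with respect to $S$.
   Context: For a group $G$ with finite generating set $S$ ($S=S^{-1}$, $e\notin S$), $|x|$ denotes the word length of $x\in G$ with respect to $S$. For $g\in G$ define $\mathrm{Av}(g)=\frac{1}{|S|}\sum_{a\in S}|a^{-1}ga|$, and for $g\neq e$ define the curvature $\kappa(g)=\frac{|g|-\mathrm{Av}(g)}{|g|}$. *)

(* Defs.v *)
From Stdlib Require Import Reals List ClassicalEpsilon.
Import ListNotations.
Open Scope R_scope.

Record Grp := {
  car :> Type;
  gmul : car -> car -> car;
  gone : car;
  ginv : car -> car;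
  gmulA : forall x y z, gmul x (gmul y z) = gmul (gmul x y) z;
  gmul1l : forall x, gmul gone x = x;
  gmul1r : forall x, gmul x gone = x;
  gmulVl : forall x, gmul (ginv x) x = gone;
  gmulVr : forall x, gmul x (ginv x) = gone
}.

Arguments gmul {g}. Arguments gone {g}. Arguments ginv {g}.

Section G.
Variable G : Grp.

Definition gen_set (S : list G) : Prop :=
  NoDup S /\ ~ In gone S /\ (forall a, In a S -> In (ginv a) S) /\
  forall x : G, exists l : list G, Forall (fun a => In a S) l /\
                              fold_right gmul gone l = x.

Definition reps (S : list G) (n : nat) (x : G) : Prop :=
  exists l : list G, length l = n /\ Forall (fun a => In a S) l /\
                     fold_right gmul gone l = x.

Definition wl (S : list G) (x : G) : nat :=
  epsilon (inhabits 0%nat)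
    (fun n => reps S n x /\ forall m, reps S m x -> (n <= m)%nat).

Definition wlR (S : list G) (x : G) : R := INR (wl S x).

Definition Av (S : list G) (g : G) : R :=
  fold_right Rplus 0 (map (fun a => wlR S (gmul (ginv a) (gmul g a))) S)
  / INR (length S).

Definition kappa (S : list G) (g : G) : R := (wlR S g - Av S g) / wlR S g.

Definition wdist (S : list G) (x y : G) : R := wlR S (gmul (ginv x) y).

Definition gromov (S : list G) (x y w : G) : R :=
  (wdist S x w + wdist S y w - wdist S x y) / 2.

Definition hyperbolic (S : list G) : Prop :=
  exists delta : R, 0 <= delta /\
    forall x y z w : G,
      gromov S x z w >= Rmin (gromov S x y w) (gromov S y z w) - delta.

Definition subgroup (H : G -> Prop) : Prop :=
  H gone /\ (forall x y, H x -> H y -> H (gmul x y)) /\ (forall x, H x -> H (ginv x)).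

Fixpoint npow (c : G) (n : nat) : G :=
  match n with O => gone | S n' => gmul c (npow c n') end.

Definition zpow (c : G) (z : Z) : G :=
  match z with
  | Z0 => gone
  | Zpos p => npow c (Pos.to_nat p)
  | Zneg p => ginv (npow c (Pos.to_nat p))
  end.

Definition cyclic_sub (H : G -> Prop) : Prop :=
  exists c, H c /\ forall h, H h -> exists z : Z, h = zpow c z.

Definition finite_index (H : G -> Prop) : Prop :=
  exists T : list G, forall g : G, exists t h, In t T /\ H h /\ g = gmul t h.

(* elementary = virtually cyclic (includes finite groups) *)
Definition virtually_cyclic : Prop :=
  exists H : G -> Prop, subgroup H /\ finite_index H /\ cyclic_sub H.

Definition non_elementary : Prop := ~ virtually_cyclic.

End G.

(* Main.v *)
Require Import Defs.
From Stdlib Require Import Reals List.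
From Stdlib Require Import Lia Lra Arith Eqdep_dec Bool Classical ClassicalEpsilon.
Import ListNotations.
Open Scope R_scope.

Inductive L3 := LA | LB | LC.
Definition L3eqb (x y : L3) : bool :=
  match x, y with LA,LA | LB,LB | LC,LC => true | _,_ => false end.
Lemma L3eqb_true x y : L3eqb x y = true -> x = y.
Proof. destruct x, y; simpl; congruence. Qed.
Lemma L3eqb_refl x : L3eqb x x = true.
Proof. destruct x; reflexivity. Qed.
Lemma L3eqb_false x y : L3eqb x y = false -> x <> y.
Proof. intros H E; subst; rewrite L3eqb_refl in H; discriminate. Qed.

Fixpoint reduced (l : list L3) : bool :=
  match l with
  | [] => true
  | x :: t => match t with [] => true | y :: _ => negb (L3eqb x y) && reduced t end
  end.

Definition push (x : L3) (l : list L3) : list L3 :=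
  match l with [] => [x] | y :: t => if L3eqb x y then t else x :: y :: t end.
Definition mulw (l1 l2 : list L3) : list L3 := fold_right push l2 l1.

Lemma red_tail x t : reduced (x :: t) = true -> reduced t = true.
Proof. destruct t; simpl; auto. intros H; apply andb_true_iff in H; tauto. Qed.

Lemma red_head x y t : reduced (x :: y :: t) = true -> L3eqb x y = false.
Proof. simpl. intros H; apply andb_true_iff in H; destruct H as [H _].
  destruct (L3eqb x y); simpl in *; congruence. Qed.

Lemma red_cons2 x y t : L3eqb x y = false -> reduced (y :: t) = true -> reduced (x :: y :: t) = true.
Proof. intros H1 H2. change (negb (L3eqb x y) && reduced (y :: t) = true). rewrite H1, H2; reflexivity. Qed.

Lemma push_red x l : reduced l = true -> reduced (push x l) = true.
Proof.
  destruct l as [|y t]; simpl; auto. intros H.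
  destruct (L3eqb x y) eqn:E. - eapply red_tail; eauto. - apply red_cons2; auto.
Qed.

Lemma mulw_red l1 l2 : reduced l2 = true -> reduced (mulw l1 l2) = true.
Proof. induction l1; simpl; auto. intros; apply push_red; auto. Qed.

Lemma push_push x m : reduced m = true -> push x (push x m) = m.
Proof.
  destruct m as [|y t]; simpl; intros H.
  - rewrite ?L3eqb_refl; reflexivity.
  - destruct (L3eqb x y) eqn:E.
    + apply L3eqb_true in E; subst. destruct t as [|z t']; simpl; rewrite ?L3eqb_refl; auto.
      apply red_head in H. rewrite H. reflexivity.
    + simpl; rewrite L3eqb_refl. reflexivity.
Qed.

Lemma mulw_push x l2 l3 : reduced l3 = true -> mulw (push x l2) l3 = push x (mulw l2 l3).
Proof.
  intros H3. destruct l2 as [|y t]; [reflexivity|]. simpl push.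
  destruct (L3eqb x y) eqn:E.
  - apply L3eqb_true in E; subst. change (mulw (y :: t) l3) with (push y (mulw t l3)).
    rewrite push_push; auto using mulw_red.
  - reflexivity.
Qed.

Lemma mulw_assoc l1 l2 l3 : reduced l3 = true ->
  mulw (mulw l1 l2) l3 = mulw l1 (mulw l2 l3).
Proof.
  intros H3; induction l1 as [|x l1 IH]; [reflexivity|].
  change (mulw (push x (mulw l1 l2)) l3 = push x (mulw l1 (mulw l2 l3))).
  rewrite mulw_push, IH; auto.
Qed.

Lemma mulw_app l1 l2 l3 : mulw (l1 ++ l2) l3 = mulw l1 (mulw l2 l3).
Proof. unfold mulw. apply fold_right_app. Qed.

Lemma push_cons x l : reduced (x :: l) = true -> push x l = x :: l.
Proof. destruct l as [|y t]; simpl; auto. intros H. apply red_head in H. rewrite H; auto. Qed.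

Lemma mulw_nil_r l : reduced l = true -> mulw l [] = l.
Proof.
  induction l as [|x l IH]; intros H; [reflexivity|].
  change (push x (mulw l []) = x :: l). rewrite IH by (eapply red_tail; eauto).
  apply push_cons; auto.
Qed.

Lemma mulw_rev_r l m : reduced m = true -> mulw l (mulw (rev l) m) = m.
Proof.
  revert m; induction l as [|x l IH]; intros m Hm; [reflexivity|].
  simpl rev. rewrite mulw_app.
  change (push x (mulw l (mulw (rev l) (push x m))) = m).
  rewrite IH by (apply push_red; auto). apply push_push; auto.
Qed.

Lemma mulw_rev_l l m : reduced m = true -> mulw (rev l) (mulw l m) = m.
Proof.
  revert m; induction l as [|x l IH]; intros m Hm; [reflexivity|].
  simpl rev. rewrite mulw_app.
  change (mulw (rev l) (push x (push x (mulw l m))) = m).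
  rewrite push_push by (apply mulw_red; auto). apply IH; auto.
Qed.

Lemma length_push x l : (length (push x l) <= S (length l))%nat.
Proof. destruct l; simpl; auto. destruct (L3eqb x l); simpl; lia. Qed.

Lemma length_mulw l1 l2 : (length (mulw l1 l2) <= length l1 + length l2)%nat.
Proof.
  induction l1; simpl; auto. pose proof (length_push a (mulw l1 l2)). unfold mulw in *. simpl in *. lia.
Qed.

Definition Hc := {l : list L3 | reduced l = true}.
Lemma Hc_eq (u v : Hc) : proj1_sig u = proj1_sig v -> u = v.
Proof.
  destruct u as [u pu], v as [v pv]; simpl; intros E; subst.
  f_equal. apply UIP_dec. apply bool_dec.
Qed.

Definition Hm (u v : Hc) : Hc :=
  exist _ (mulw (proj1_sig u) (proj1_sig v)) (mulw_red _ _ (proj2_sig v)).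
Definition He : Hc := exist _ [] eq_refl.
Definition Hi (u : Hc) : Hc :=
  exist _ (mulw (rev (proj1_sig u)) []) (mulw_red _ [] eq_refl).

Inductive K6 := ke | kx | ky | kxy | kyx | kxyx.
Definition kmul (a b : K6) : K6 :=
  match a, b with
  | ke, ke => ke
  | ke, kx => kx
  | ke, ky => ky
  | ke, kxy => kxy
  | ke, kyx => kyx
  | ke, kxyx => kxyx
  | kx, ke => kx
  | kx, kx => ke
  | kx, ky => kxy
  | kx, kxy => ky
  | kx, kyx => kxyx
  | kx, kxyx => kyx
  | ky, ke => ky
  | ky, kx => kyx
  | ky, ky => ke
  | ky, kxy => kxyx
  | ky, kyx => kx
  | ky, kxyx => kxy
  | kxy, ke => kxy
  | kxy, kx => kxyx
  | kxy, ky => kx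
  | kxy, kxy => kyx
  | kxy, kyx => ke
  | kxy, kxyx => ky
  | kyx, ke => kyx
  | kyx, kx => ky
  | kyx, ky => kxyx
  | kyx, kxy => ke
  | kyx, kyx => kxy
  | kyx, kxyx => kx
  | kxyx, ke => kxyx
  | kxyx, kx => kxy
  | kxyx, ky => kyx
  | kxyx, kxy => kx
  | kxyx, kyx => ky
  | kxyx, kxyx => ke
  end.
Definition kinv (a : K6) : K6 :=
  match a with kxy => kyx | kyx => kxy | a => a end.
Definition lenK (a : K6) : nat :=
  match a with ke => 0 | kx => 1 | ky => 1 | kxy => 2 | kyx => 2 | kxyx => 3 end%nat.

Definition Gc := (Hc * K6)%type.
Definition Gm (u v : Gc) : Gc := (Hm (fst u) (fst v), kmul (snd u) (snd v)).
Definition Ge : Gc := (He, ke).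
Definition Gi (u : Gc) : Gc := (Hi (fst u), kinv (snd u)).

Lemma GmA x y z : Gm x (Gm y z) = Gm (Gm x y) z.
Proof.
  destruct x as [x1 x2], y as [y1 y2], z as [z1 z2]. unfold Gm; simpl. f_equal.
  - apply Hc_eq; simpl. rewrite mulw_assoc; auto. apply (proj2_sig z1).
  - destruct x2, y2, z2; reflexivity.
Qed.
Lemma Gm1l x : Gm Ge x = x.
Proof. destruct x as [x1 x2]; unfold Gm, Gi, Ge; apply (f_equal2 pair); [apply Hc_eq; reflexivity| destruct x2; reflexivity]. Qed.
Lemma Gm1r x : Gm x Ge = x.
Proof. destruct x as [x1 x2]; unfold Gm, Gi, Ge; apply (f_equal2 pair); [apply Hc_eq; simpl; apply mulw_nil_r, (proj2_sig x1)| destruct x2; reflexivity]. Qed.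
Lemma GmVl x : Gm (Gi x) x = Ge.
Proof.
  destruct x as [[x1 p] x2]; unfold Gm, Gi, Ge; apply (f_equal2 pair); [apply Hc_eq; simpl| destruct x2; reflexivity].
  rewrite mulw_assoc by exact p. simpl. rewrite <- (mulw_nil_r x1 p) at 2. apply mulw_rev_l; reflexivity.
Qed.
Lemma GmVr x : Gm x (Gi x) = Ge.
Proof.
  destruct x as [[x1 p] x2]; unfold Gm, Gi, Ge; apply (f_equal2 pair); [apply Hc_eq; simpl| destruct x2; reflexivity].
  apply mulw_rev_r; reflexivity.
Qed.

Definition GG : Grp := {| car := Gc; gmul := Gm; gone := Ge; ginv := Gi;
  gmulA := GmA; gmul1l := Gm1l; gmul1r := Gm1r; gmulVl := GmVl; gmulVr := GmVr |}.

Section GenG.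
Variable G : Grp.
Lemma inv_unique (a b : G) : gmul a b = gone -> b = ginv a.
Proof.
  intros H. rewrite <- (gmul1l G b), <- (gmulVl G a), <- gmulA, H, gmul1r. reflexivity.
Qed.
Lemma inv_mul (a b : G) : ginv (gmul a b) = gmul (ginv b) (ginv a).
Proof.
  symmetry; apply inv_unique. rewrite gmulA, <- (gmulA G a b), gmulVr, gmul1r, gmulVr. reflexivity.
Qed.
Lemma inv_inv (a : G) : ginv (ginv a) = a.
Proof. symmetry; apply inv_unique, gmulVl. Qed.
Lemma cancel_l (a x y : G) : gmul a x = gmul a y -> x = y.
Proof.
  intros H. rewrite <- (gmul1l G x), <- (gmul1l G y), <- (gmulVl G a), <- !gmulA, H. reflexivity.
Qed.
Lemma fold_app_G' (l1 l2 : list G) :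
  fold_right gmul gone (l1 ++ l2) = gmul (fold_right gmul gone l1) (fold_right gmul gone l2).
Proof.
  induction l1; simpl. - rewrite gmul1l; auto. - rewrite IHl1, gmulA; auto.
Qed.
End GenG.

Definition hA : Hc := exist _ [LA] eq_refl.
Definition hB : Hc := exist _ [LB] eq_refl.
Definition hC : Hc := exist _ [LC] eq_refl.
Definition gA : Gc := (hA, ke).
Definition gB : Gc := (hB, ke).
Definition gC : Gc := (hC, ke).
Definition gX : Gc := (He, kx).
Definition gY : Gc := (He, ky).
Definition SS : list GG := [gA; gB; gC; gX; gY].

Definition Lg (g : Gc) : nat := (length (proj1_sig (fst g)) + lenK (snd g))%nat.

Lemma kmul_e k : kmul ke k = k.
Proof. destruct k; reflexivity. Qed.

Lemma L_step (s g : Gc) : In s SS -> (Lg (Gm s g) <= S (Lg g))%nat.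
Proof.
  destruct g as [[g1 p] k]. unfold Lg.
  simpl In; intros [H|[H|[H|[H|[H|[]]]]]]; subst; simpl;
   pose proof (length_push LA g1); pose proof (length_push LB g1);
   pose proof (length_push LC g1); destruct k; simpl; lia.
Qed.

Lemma L_lower n (g : GG) : reps GG SS n g -> (Lg g <= n)%nat.
Proof.
  intros [l [Hl [HF Hp]]]. subst. revert HF. induction l as [|s l IH]; intros HF.
  - simpl. unfold Lg; simpl. lia.
  - inversion HF; subst. simpl. pose proof (L_step s (fold_right gmul gone l) H1).
    specialize (IH H2). simpl in *. lia.
Qed.

Definition letter (x : L3) : Gc := match x with LA => gA | LB => gB | LC => gC end.
Definition kw (k : K6) : list Gc :=
  match k with ke => [] | kx => [gX] | ky => [gY] | kxy => [gX; gY] | kyx => [gY; gX]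
  | kxyx => [gX; gY; gX] end.

Lemma fold_hw l : proj1_sig (fst (fold_right Gm Ge (map letter l))) = mulw l [] /\
                  snd (fold_right Gm Ge (map letter l)) = ke.
Proof.
  induction l as [|x l IH]; simpl; [auto|]. destruct IH as [IH1 IH2].
  rewrite IH2. destruct x; simpl; rewrite IH1; auto.
Qed.

Lemma fold_kw k : proj1_sig (fst (fold_right Gm Ge (kw k))) = [] /\ snd (fold_right Gm Ge (kw k)) = k.
Proof. destruct k; simpl; auto. Qed.


Lemma L_upper (g : GG) : reps GG SS (Lg g) g.
Proof.
  destruct g as [[l p] k].
  exists (map letter l ++ kw k). split; [|split].
  - rewrite length_app, length_map. unfold Lg; simpl. destruct k; simpl; lia.
  - apply Forall_app; split.
    + apply Forall_forall. intros s Hs. apply in_map_iff in Hs. destruct Hs as [x [<- _]].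
      destruct x; simpl; tauto.
    + destruct k; simpl; repeat (apply Forall_cons; [simpl; tauto|]); apply Forall_nil.
  - rewrite (fold_app_G' GG).
    destruct (fold_hw l) as [H1 H2]. destruct (fold_kw k) as [H3 H4].
    change (Gm (fold_right Gm Ge (map letter l)) (fold_right Gm Ge (kw k)) = (exist _ l p, k)).
    set (P := fold_right Gm Ge (map letter l)) in *. set (Q := fold_right Gm Ge (kw k)) in *.
    clearbody P Q. unfold Gm. apply (f_equal2 pair).
    + apply Hc_eq. unfold Hm. cbn [proj1_sig]. rewrite H1, H3. rewrite !mulw_nil_r; auto; apply mulw_red; reflexivity.
    + rewrite H2, H4. apply kmul_e.
Qed.

Lemma wl_eq (g : GG) : wl GG SS g = Lg g.
Proof.
  unfold wl.
  destruct (epsilon_spec (inhabits 0%nat)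
     (fun n => reps GG SS n g /\ forall m, reps GG SS m g -> (n <= m)%nat)) as [H1 H2].
  - exists (Lg g). split; [apply L_upper|]. intros m Hm; apply L_lower; auto.
  - apply L_lower in H1. specialize (H2 _ (L_upper g)). lia.
Qed.

Section GenG2.
Variable G : Grp.
Lemma conj_mid (x z w : G) :
  gmul (ginv (gmul (ginv w) x)) (gmul (ginv w) z) = gmul (ginv x) z.
Proof.
  rewrite inv_mul, inv_inv, <- gmulA, (gmulA G w (ginv w) z), gmulVr, gmul1l. reflexivity.
Qed.
Lemma inv_conj (x w : G) : ginv (gmul (ginv w) x) = gmul (ginv x) w.
Proof. rewrite inv_mul, inv_inv. reflexivity. Qed.
Lemma npow_add (c : G) m n : npow G c (m + n) = gmul (npow G c m) (npow G c n).
Proof. induction m; simpl. - rewrite gmul1l; auto. - rewrite IHm, gmulA; auto. Qed.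
Lemma npow_comm_c (c : G) n : gmul c (npow G c n) = gmul (npow G c n) c.
Proof. induction n; simpl. - rewrite gmul1l, gmul1r; auto. - rewrite <- gmulA, <- IHn; auto. Qed.
Lemma npow_comm (c : G) m n : gmul (npow G c m) (npow G c n) = gmul (npow G c n) (npow G c m).
Proof.
  induction m; simpl. - rewrite gmul1l, gmul1r; auto.
  - rewrite <- gmulA, IHm, gmulA, npow_comm_c, <- gmulA. reflexivity.
Qed.
Lemma comm_inv_l (a b : G) : gmul a b = gmul b a -> gmul (ginv a) b = gmul b (ginv a).
Proof.
  intros H. apply (cancel_l G a). rewrite gmulA, gmulVr, gmul1l, gmulA, H, <- gmulA, gmulVr, gmul1r. reflexivity.
Qed.
Lemma comm_inv_r (a b : G) : gmul a b = gmul b a -> gmul a (ginv b) = gmul (ginv b) a.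
Proof. intros H. symmetry. apply comm_inv_l. auto. Qed.
Lemma zpow_comm (c : G) a b : gmul (zpow G c a) (zpow G c b) = gmul (zpow G c b) (zpow G c a).
Proof.
  destruct a, b; simpl; rewrite ?gmul1l, ?gmul1r; auto;
  first [ apply npow_comm | (apply comm_inv_l; apply npow_comm) | (apply comm_inv_r; apply npow_comm)
        | (apply comm_inv_l; apply comm_inv_r; apply npow_comm) ].
Qed.
Lemma solve_p (t hi hj p : G) : gmul t hj = gmul (gmul t hi) p -> p = gmul (ginv hi) hj.
Proof.
  intros E. rewrite <- gmulA in E. apply cancel_l in E. subst.
  rewrite gmulA, gmulVl, gmul1l. reflexivity.
Qed.

Lemma pigeon {A : Type} (T : list A) (f : nat -> A) :
  (forall n, In (f n) T) -> exists i j, (i < j)%nat /\ f i = f j.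
Proof.
  intros HT. apply NNPP. intros Hn.
  assert (ND : NoDup (map f (seq 0 (S (length T))))).
  { apply NoDup_map_NoDup_ForallPairs; [|apply seq_NoDup].
    intros x y _ _ E. destruct (lt_eq_lt_dec x y) as [[Hl|Hl]|Hl]; auto;
      exfalso; apply Hn; eauto. }
  apply NoDup_incl_length with (l' := T) in ND.
  - rewrite length_map, length_seq in ND. lia.
  - intros a Ha. apply in_map_iff in Ha. destruct Ha as [n [<- _]]. auto.
Qed.

Lemma coset_pow (H : G -> Prop) (T : list G) (g : G) :
  subgroup G H -> (forall x : G, exists t h, In t T /\ H h /\ x = gmul t h) ->
  exists d, (1 <= d)%nat /\ H (npow G g d).
Proof.
  intros [H1 [HM HI]] HT.
  set (f := fun n => proj1_sig (constructive_indefinite_description _ (HT (npow G g n)))).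
  assert (Hf : forall n, In (f n) T /\ exists h, H h /\ npow G g n = gmul (f n) h).
  { intros n. unfold f. destruct (constructive_indefinite_description _ _) as [t [h Ht]]; simpl.
    split; [tauto| exists h; tauto]. }
  destruct (pigeon T f (fun n => proj1 (Hf n))) as [i [j [Hij E]]].
  destruct (proj2 (Hf i)) as [hi [Hhi Ei]]. destruct (proj2 (Hf j)) as [hj [Hhj Ej]].
  exists (j - i)%nat. split; [lia|].
  assert (Ej' : npow G g j = gmul (npow G g i) (npow G g (j - i))).
  { rewrite <- npow_add. f_equal. lia. }
  rewrite Ej, Ei, <- E in Ej'. apply solve_p in Ej'. rewrite Ej'. auto.
Qed.
End GenG2.

Fixpoint lcp (l1 l2 : list L3) : nat :=
  match l1, l2 with
  | x :: t1, y :: t2 => if L3eqb x y then S (lcp t1 t2) else 0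
  | _, _ => 0 end.

Lemma L3eqb_sym x y : L3eqb x y = L3eqb y x.
Proof. destruct x, y; reflexivity. Qed.

Lemma lcp_ultra X Y Z : (lcp X Y <= lcp X Z \/ lcp Y Z <= lcp X Z)%nat.
Proof.
  revert Y Z; induction X as [|x X IH]; intros Y Z; simpl; [left; auto|].
  destruct Y as [|y Y]; [left; lia|]. destruct Z as [|z Z]; [right; simpl; lia|]. simpl.
  destruct (L3eqb x y) eqn:E1; [|left; lia].
  apply L3eqb_true in E1; subst.
  destruct (L3eqb y z) eqn:E2; [|right; lia].
  destruct (IH Y Z); [left|right]; lia.
Qed.

Lemma lcp_zero x X l : reduced (x :: X) = true -> lcp X (x :: l) = 0%nat.
Proof.
  destruct X as [|y X]; simpl; auto. intros H. apply red_head in H.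
  rewrite L3eqb_sym, H. reflexivity.
Qed.

Lemma tree X Z : reduced X = true -> reduced Z = true ->
  (length (mulw (rev X) Z) + 2 * lcp X Z = length X + length Z)%nat.
Proof.
  revert Z; induction X as [|x X IH]; intros Z HX HZ; [simpl; lia|].
  simpl rev. rewrite mulw_app. change (mulw [x] Z) with (push x Z).
  pose proof (red_tail _ _ HX) as HX'.
  destruct Z as [|z Z'].
  - simpl push. specialize (IH [x] HX' eq_refl). rewrite (lcp_zero x X []) in IH by auto.
    simpl in *. lia.
  - simpl push. simpl lcp. destruct (L3eqb x z) eqn:E.
    + specialize (IH Z' HX' (red_tail _ _ HZ)). simpl. lia.
    + specialize (IH (x :: z :: Z') HX' (red_cons2 _ _ _ E HZ)).
      rewrite lcp_zero in IH by auto. simpl in *. lia.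
Qed.

Lemma lenK_le k : (lenK k <= 3)%nat.
Proof. destruct k; simpl; lia. Qed.

Lemma len_Gi (g : GG) : length (proj1_sig (fst (Gi g))) = length (proj1_sig (fst g)).
Proof.
  assert (A : forall u : GG, (length (proj1_sig (fst (Gi u))) <= length (proj1_sig (fst u)))%nat).
  { intros [[u p] k]. simpl. pose proof (length_mulw (rev u) []). rewrite length_rev in H. simpl in H. lia. }
  pose proof (A g). pose proof (A (Gi g)).
  change (Gi (Gi g)) with (ginv (ginv (g : GG))) in H0. rewrite inv_inv in H0. lia.
Qed.

Lemma gromov_eq (x z w : GG) :
  exists a b c : R, 0 <= a <= 3 /\ 0 <= b <= 3 /\ 0 <= c <= 3 /\
  gromov GG SS x z w = INR (lcp (proj1_sig (fst (Gm (Gi w) x))) (proj1_sig (fst (Gm (Gi w) z))))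
     + (a + b - c) / 2.
Proof.
  set (X := Gm (Gi w) x). set (Z := Gm (Gi w) z).
  unfold gromov, wdist, wlR. rewrite !wl_eq.
  assert (E1 : gmul (ginv x) w = Gi X) by (symmetry; apply (inv_conj GG)).
  assert (E2 : gmul (ginv z) w = Gi Z) by (symmetry; apply (inv_conj GG)).
  assert (E3 : gmul (ginv x) z = Gm (Gi X) Z) by (symmetry; apply (conj_mid GG)).
  rewrite E1, E2, E3. unfold Lg. rewrite !len_Gi.
  destruct X as [[X1 pX] kX], Z as [[Z1 pZ] kZ]. simpl fst. simpl snd. cbn [proj1_sig].
  unfold Hm, Hi. cbn [proj1_sig].
  rewrite mulw_assoc by auto. simpl (mulw [] Z1).
  pose proof (tree X1 Z1 pX pZ).
  exists (INR (lenK (kinv kX))), (INR (lenK (kinv kZ))), (INR (lenK (kmul (kinv kX) kZ))).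
  repeat split; try apply pos_INR;
    try (replace 3 with (INR 3) by (simpl; lra); apply le_INR, lenK_le).
  rewrite !plus_INR.
  assert (HR : INR (length (mulw (rev X1) Z1)) + 2 * INR (lcp X1 Z1) = INR (length X1) + INR (length Z1)).
  { rewrite <- plus_INR. rewrite <- H. rewrite plus_INR, mult_INR. simpl (INR 2). lra. }
  lra.
Qed.

Lemma hyp : hyperbolic GG SS.
Proof.
  exists 5. split; [lra|]. intros x y z w.
  destruct (gromov_eq x z w) as [a1 [b1 [c1 [? [? [? Exz]]]]]].
  destruct (gromov_eq x y w) as [a2 [b2 [c2 [? [? [? Exy]]]]]].
  destruct (gromov_eq y z w) as [a3 [b3 [c3 [? [? [? Eyz]]]]]].
  rewrite Exz, Exy, Eyz.
  destruct (lcp_ultra (proj1_sig (fst (Gm (Gi w) x))) (proj1_sig (fst (Gm (Gi w) y)))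
     (proj1_sig (fst (Gm (Gi w) z)))) as [U|U]; apply le_INR in U;
  unfold Rmin; destruct Rle_dec; lra.
Qed.

Definition key (g : Gc) : (list L3 * K6) := (proj1_sig (fst g), snd g).

Lemma Gi_gA : Gi gA = gA. Proof. unfold Gi; apply (f_equal2 pair); [apply Hc_eq|]; reflexivity. Qed.
Lemma Gi_gB : Gi gB = gB. Proof. unfold Gi; apply (f_equal2 pair); [apply Hc_eq|]; reflexivity. Qed.
Lemma Gi_gC : Gi gC = gC. Proof. unfold Gi; apply (f_equal2 pair); [apply Hc_eq|]; reflexivity. Qed.
Lemma Gi_gX : Gi gX = gX. Proof. unfold Gi; apply (f_equal2 pair); [apply Hc_eq|]; reflexivity. Qed.
Lemma Gi_gY : Gi gY = gY. Proof. unfold Gi; apply (f_equal2 pair); [apply Hc_eq|]; reflexivity. Qed.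

Lemma genS : gen_set GG SS.
Proof.
  split; [|split; [|split]].
  - apply (NoDup_map_inv key). simpl.
    repeat (apply NoDup_cons; [simpl; intuition discriminate|]). apply NoDup_nil.
  - intros H. apply (in_map key) in H. simpl in H. intuition discriminate.
  - intros a H. simpl in H.
    destruct H as [<-|[<-|[<-|[<-|[<-|[]]]]]]; simpl ginv;
      [rewrite Gi_gA|rewrite Gi_gB|rewrite Gi_gC|rewrite Gi_gX|rewrite Gi_gY]; simpl; tauto.
  - intros x. destruct (L_upper x) as [l [_ [H1 H2]]]. exists l; auto.
Qed.

Fixpoint alt (p : L3) (n : nat) : list L3 :=
  match n with O => [] | S m => LA :: p :: alt p m end.

Definition gAB : Gc := (exist _ [LA; LB] eq_refl, ke).
Definition gAC : Gc := (exist _ [LA; LC] eq_refl, ke).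

Lemma npow_AB n : proj1_sig (fst (npow GG gAB n)) = alt LB n /\ snd (npow GG gAB n) = ke.
Proof.
  induction n as [|n [IH1 IH2]]; [split; reflexivity|].
  change (npow GG gAB (S n)) with (Gm gAB (npow GG gAB n)).
  unfold Gm. split.
  - unfold Hm. cbn [proj1_sig fst]. rewrite IH1. destruct n; reflexivity.
  - cbn [snd]. rewrite IH2. reflexivity.
Qed.
Lemma npow_AC n : proj1_sig (fst (npow GG gAC n)) = alt LC n /\ snd (npow GG gAC n) = ke.
Proof.
  induction n as [|n [IH1 IH2]]; [split; reflexivity|].
  change (npow GG gAC (S n)) with (Gm gAC (npow GG gAC n)).
  unfold Gm. split.
  - unfold Hm. cbn [proj1_sig fst]. rewrite IH1. destruct n; reflexivity.
  - cbn [snd]. rewrite IH2. reflexivity.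
Qed.

Lemma red_cons_hd y m : reduced m = true ->
  (forall z t, m = z :: t -> L3eqb y z = false) -> reduced (y :: m) = true.
Proof. destruct m as [|z t]; auto. intros H1 H2. apply red_cons2; eauto. Qed.

Lemma red_alt_app p n l : L3eqb p LA = false -> reduced l = true ->
  (forall z t, l = z :: t -> z = LA) -> reduced (alt p n ++ l) = true.
Proof.
  intros Hp Hl Hh. induction n as [|n IH]; [exact Hl|].
  change (reduced (LA :: p :: (alt p n ++ l)) = true).
  apply red_cons2; [destruct p; simpl in *; auto; discriminate|].
  apply red_cons_hd; auto. intros z t E.
  destruct n; simpl in E.
  - apply Hh in E. subst. auto.
  - injection E; intros; subst. auto.
Qed.

Lemma mulw_app_red l1 l2 : reduced (l1 ++ l2) = true -> mulw l1 l2 = l1 ++ l2.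
Proof.
  induction l1 as [|x l1 IH]; intros H; [reflexivity|].
  change (push x (mulw l1 l2) = x :: l1 ++ l2). rewrite IH by (eapply red_tail; eauto).
  apply push_cons; auto.
Qed.

Lemma red_alt p n : L3eqb p LA = false -> reduced (alt p n) = true.
Proof.
  intros Hp. rewrite <- (app_nil_r (alt p n)). apply red_alt_app; auto. discriminate.
Qed.

Lemma no_comm i j : (1 <= i)%nat -> (1 <= j)%nat ->
  Gm (npow GG gAB i) (npow GG gAC j) <> Gm (npow GG gAC j) (npow GG gAB i).
Proof.
  intros Hi Hj E. apply (f_equal (fun g => proj1_sig (fst g))) in E.
  unfold Gm, Hm in E. cbn [proj1_sig fst] in E.
  rewrite (proj1 (npow_AB i)), (proj1 (npow_AC j)) in E.
  destruct i as [|i]; [lia|]. destruct j as [|j]; [lia|].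
  assert (R1 : reduced (alt LB (S i) ++ alt LC (S j)) = true).
  { apply red_alt_app; [reflexivity|apply red_alt; reflexivity|]. intros z t Ez. simpl in Ez. congruence. }
  assert (R2 : reduced (alt LC (S j) ++ alt LB (S i)) = true).
  { apply red_alt_app; [reflexivity|apply red_alt; reflexivity|]. intros z t Ez. simpl in Ez. congruence. }
  rewrite (mulw_app_red _ _ R1), (mulw_app_red _ _ R2) in E.
  simpl in E. discriminate.
Qed.

Lemma nonelem : non_elementary GG.
Proof.
  intros [H [Hs [[T HT] [c [Hc Hcyc]]]]].
  destruct (coset_pow GG H T gAB Hs HT) as [d1 [Hd1 H1]].
  destruct (coset_pow GG H T gAC Hs HT) as [d2 [Hd2 H2]].
  destruct (Hcyc _ H1) as [z1 E1]. destruct (Hcyc _ H2) as [z2 E2].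
  apply (no_comm d1 d2 Hd1 Hd2).
  change (gmul (npow GG gAB d1) (npow GG gAC d2) = gmul (npow GG gAC d2) (npow GG gAB d1)).
  rewrite E1, E2. apply zpow_comm.
Qed.

Fixpoint cbl (n : nat) : list L3 := match n with O => [] | S m => LC :: LB :: cbl m end.
Definition hw (n : nat) : list L3 := LA :: LB :: cbl n ++ [LA].

Lemma red_mid n : reduced (LB :: cbl n ++ [LA]) = true.
Proof.
  induction n as [|n IH]; [reflexivity|].
  change (reduced (LB :: LC :: LB :: (cbl n ++ [LA])) = true).
  apply red_cons2; [reflexivity|]. apply red_cons2; [reflexivity|]. exact IH.
Qed.
Lemma red_mid' n : reduced (LB :: cbl n) = true.
Proof.
  induction n as [|n IH]; [reflexivity|].
  change (reduced (LB :: LC :: LB :: cbl n) = true).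
  apply red_cons2; [reflexivity|]. apply red_cons2; [reflexivity|]. exact IH.
Qed.
Lemma red_hw n : reduced (hw n) = true.
Proof. unfold hw. apply red_cons2; [reflexivity|]. apply red_mid. Qed.

Lemma len_cbl n : length (cbl n) = (2 * n)%nat.
Proof. induction n; simpl; lia. Qed.
Lemma len_hw n : length (hw n) = (2 * n + 3)%nat.
Proof. unfold hw. simpl. rewrite length_app, len_cbl. simpl. lia. Qed.

Definition ww (n : nat) : GG := (exist _ (hw n) (red_hw n), kxyx).

Lemma Lg_ww n : Lg (ww n) = (2 * n + 6)%nat.
Proof. unfold Lg, ww. cbn [proj1_sig fst snd]. rewrite len_hw. simpl. lia. Qed.

Lemma Lg_sub (u v : Gc) : (Lg (Gm u v) <= Lg u + Lg v)%nat.
Proof.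
  destruct u as [[u p] k1], v as [[v q] k2]. unfold Lg, Gm, Hm. cbn [proj1_sig fst snd].
  pose proof (length_mulw u v). destruct k1, k2; simpl; lia.
Qed.

Lemma conjA n : Lg (Gm (Gi gA) (Gm (ww n) gA)) = (2 * n + 4)%nat.
Proof.
  unfold Lg, Gm, Gi, Hm, Hi, ww, gA, hA. cbn [proj1_sig fst snd].
  change (hw n) with ((LA :: LB :: cbl n) ++ [LA]). rewrite mulw_app.
  change (mulw [LA] [LA]) with (@nil L3).
  rewrite (mulw_nil_r (LA :: LB :: cbl n)) by (apply red_cons2; [reflexivity|apply red_mid']).
  simpl (mulw (rev [LA]) []). change (mulw [LA] (LA :: LB :: cbl n)) with (push LA (LA :: LB :: cbl n)).
  simpl. rewrite len_cbl. lia.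
Qed.

Lemma conjX n : Lg (Gm (Gi gX) (Gm (ww n) gX)) = (2 * n + 4)%nat.
Proof.
  unfold Lg, Gm, Gi, Hm, Hi, ww, gX, He. cbn [proj1_sig fst snd].
  rewrite (mulw_nil_r (hw n)) by apply red_hw. simpl (mulw (rev []) []).
  change (mulw [] (hw n)) with (hw n). rewrite len_hw. simpl. lia.
Qed.

Lemma conjY n : Lg (Gm (Gi gY) (Gm (ww n) gY)) = (2 * n + 4)%nat.
Proof.
  unfold Lg, Gm, Gi, Hm, Hi, ww, gY, He. cbn [proj1_sig fst snd].
  rewrite (mulw_nil_r (hw n)) by apply red_hw. simpl (mulw (rev []) []).
  change (mulw [] (hw n)) with (hw n). rewrite len_hw. simpl. lia.
Qed.

Lemma conj_gen (s : Gc) n : Lg (Gi s) = 1%nat -> Lg s = 1%nat ->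
  (Lg (Gm (Gi s) (Gm (ww n) s)) <= 2 * n + 8)%nat.
Proof.
  intros H1 H2. pose proof (Lg_sub (Gi s) (Gm (ww n) s)). pose proof (Lg_sub (ww n) s).
  rewrite Lg_ww in *. lia.
Qed.

Lemma kappa_pos n : kappa GG SS (ww n) > 0.
Proof.
  unfold kappa, Av, wlR. unfold SS. cbn [map fold_right length]. rewrite !wl_eq.
  change (@gmul GG) with Gm. change (@ginv GG) with Gi.
  rewrite conjA, conjX, conjY, Lg_ww.
  pose proof (conj_gen gB n eq_refl eq_refl) as HB.
  pose proof (conj_gen gC n eq_refl eq_refl) as HC.
  apply le_INR in HB, HC.
  rewrite !plus_INR, !mult_INR in *. simpl INR in *.
  apply Rdiv_lt_0_compat; [|pose proof (pos_INR n); lra].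
  pose proof (pos_INR n). lra.
Qed.

Lemma ww_inj i j : ww i = ww j -> i = j.
Proof.
  intros E. apply (f_equal (fun g : Gc => length (proj1_sig (fst g)))) in E.
  unfold ww in E. cbn [proj1_sig fst] in E. rewrite !len_hw in E. lia.
Qed.

Lemma ww_ne n : ww n <> gone.
Proof. intros E. apply (f_equal snd) in E. discriminate. Qed.

Theorem mainTheorem9 :
  exists (G : Grp) (S : list G) (w : nat -> G),
    gen_set G S /\ hyperbolic G S /\ non_elementary G /\
    (forall i j : nat, w i = w j -> i = j) /\
    (forall i : nat, w i <> gone /\ kappa G S (w i) > 0).
Proof.
  exists GG, SS, ww. split; [exact genS|]. split; [exact hyp|]. split; [exact nonelem|].
  split; [exact ww_inj|]. intros i; split; [apply ww_ne|apply kappa_pos].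
Qed.
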